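(* Let $n>1$ and let $a_0,\dots,a_{n-1},c_0,\dots,c_{n-1}\in\mathbb Z/(n)$ with $a_i=a_{-i}$ and $c_i=c_{-i}$ for all $i\in\mathbb Z/(n)$. If there exists an invertible $a\in\mathbb Z/(n)$ such that $a\,a_i=c_{ai}$ for all $i\in\mathbb Z/(n)$, then the solutions $(X,r_{a_0,\dots,a_{n-1}})$ and $(X,r_{c_0,\dots,c_{n-1}})$ are isomorphic. Conversely, if the bilinear forms $b_{a_0,\dots,a_{n-1}}$ and $b_{c_0,\dots,c_{n-1}}$ are both non-singular and these two solutions are isomorphic, then there exists an invertible $a\in\mathbb Z/(n)$ with $a\,a_i=c_{ai}$ for all $i$.
   Context: Let $n>1$, $X=\{x_{ij}: i,j\in\mathbb Z/(n)\}$ (a set of $n^2$ elements indexed by $(\mathbb Z/(n))^2$). For $j_0,\dots,j_{n-1}\in\mathbb Z/(n)$ with $j_i=j_{-i}$, let $r_{j_0,\dots,j_{n-1}}(x,y)=(\lambda_x(y),\lambda^{-1}_{\lambda_x(y)}(x))$, where $\lambda_{x_{ij}}(x_{kl})=x_{k+j,\ l-j_{k+j-i}}$; this is a solution of the YBE (it is the restriction to $x_{ij}=(e_i,j)$ of the solution associated to the left brace $(\mathbb Z/(n))^n\times\mathbb Z/(n)$ with $(u,i)\circ(v,j)=(u+\alpha(i)(v),i+j)$, $(u,i)+(v,j)=(u+v,i+j+b(u,v))$, $\alpha(i)(e_k)=e_{i+k}$). Here $b_{j_0,\dots,j_{n-1}}$ is the bilinear form on $(\mathbb Z/(n))^n$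 with $b(e_k,e_l)=j_{l-k}$ for the standard basis $(e_k)_{k\in\mathbb Z/(n)}$; it is non-singular if $b(u,v)=0$ for all $v$ implies $u=0$. An isomorphism of solutions $f:(X,r)\to(X,s)$ (with $r(x,y)=(\sigma_x(y),\cdot)$, $s(x,y)=(\sigma'_x(y),\cdot)$) is a bijection with $f(\sigma_x(y))=\sigma'_{f(x)}(f(y))$ for all $x,y$. *)

(* Defs.v *)
From mathcomp Require Import all_boot all_order all_algebra.
Set Implicit Arguments. Unset Strict Implicit. Unset Printing Implicit Defensive.
Import GRing.Theory.
Local Open Scope ring_scope.

(* The set X = {x_ij : i,j in Z/(n)}, with x_ij represented by the pair (i,j).
   Parameters j_0,...,j_{n-1} are encoded as a function J : 'Z_n -> 'Z_n. *)
Definition XZ (n : nat) := ('Z_n * 'Z_n)%type.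

Definition lam (n : nat) (J : 'Z_n -> 'Z_n) (x y : XZ n) : XZ n :=
  (y.1 + x.2, y.2 - J (y.1 + x.2 - x.1)).

Definition sym_param (n : nat) (J : 'Z_n -> 'Z_n) : Prop :=
  forall i : 'Z_n, J i = J (- i).

Definition sol_iso (n : nat) (J K : 'Z_n -> 'Z_n) (f : XZ n -> XZ n) : Prop :=
  bijective f /\ forall x y : XZ n, f (lam J x y) = lam K (f x) (f y).

Definition sols_isomorphic (n : nat) (J K : 'Z_n -> 'Z_n) : Prop :=
  exists f : XZ n -> XZ n, sol_iso J K f.

Definition bform (n : nat) (J : 'Z_n -> 'Z_n) (u v : 'Z_n -> 'Z_n) : 'Z_n :=
  \sum_(k : 'Z_n) \sum_(l : 'Z_n) u k * v l * J (l - k).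

Definition nonsingular (n : nat) (J : 'Z_n -> 'Z_n) : Prop :=
  forall u : 'Z_n -> 'Z_n, (forall v : 'Z_n -> 'Z_n, bform J u v = 0) ->
    forall k, u k = 0.

(* Main.v *)
Require Import Defs.
From mathcomp Require Import all_boot all_order all_algebra.
Import GRing.Theory.
Local Open Scope ring_scope.
Set Implicit Arguments. Unset Strict Implicit.

Lemma indep n (J : 'Z_n -> 'Z_n) : nonsingular J ->
  forall u : 'Z_n -> 'Z_n, (forall l, \sum_k u k * J (l - k) = 0) -> forall k, u k = 0.
Proof.
move=> ns u hu; apply: ns => v; rewrite /bform exchange_big /=.
apply: big1 => l _.
rewrite (eq_bigr (fun k => v l * (u k * J (l - k)))); last first.
  by move=> k _; rewrite -mulrA mulrCA.
by rewrite -mulr_sumr hu mulr0.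
Qed.

Definition ind {n} (p : 'Z_n) := fun m : 'Z_n => ((m == p)%:R : 'Z_n).

Lemma sum_ind n (J : 'Z_n -> 'Z_n) p l : \sum_k ind p k * J (l - k) = J (l - p).
Proof.
rewrite (bigD1 p) //= /ind eqxx mul1r big1 ?addr0 // => k /negbTE ->.
by rewrite mul0r.
Qed.

Lemma sum_ind2 n (J : 'Z_n -> 'Z_n) p q l :
  \sum_k (ind p k - ind q k) * J (l - k) = J (l - p) - J (l - q).
Proof.
rewrite (eq_bigr (fun k => ind p k * J (l - k) - ind q k * J (l - k))).
  by rewrite sumrB !sum_ind.
by move=> k _; rewrite mulrBl.
Qed.

Lemma sum_ind4 n (J : 'Z_n -> 'Z_n) p q r s l :
  \sum_k (ind p k + ind q k - ind r k - ind s k) * J (l - k) =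
   J (l - p) + J (l - q) - J (l - r) - J (l - s).
Proof.
rewrite (eq_bigr (fun k => ind p k * J (l - k) + ind q k * J (l - k)
     - ind r k * J (l - k) - ind s k * J (l - k))).
  by rewrite !sumrB big_split /= !sum_ind.
by move=> k _; rewrite !mulrBl mulrDl.
Qed.

Lemma oneZ_neq0 n : (1 : 'Z_n) != 0.
Proof. exact: oner_neq0. Qed.

Lemma twoZ_neq0 n : (2 < n)%N -> (2%:R : 'Z_n) != 0.
Proof.
move=> hn; apply/eqP => h; have := val_Zp_nat (ltnW hn) 2.
by rewrite h /= modn_small.
Qed.
From mathcomp Require Import ring.

Definition comm {n} (J : 'Z_n -> 'Z_n) (x y : XZ n) :=
  forall v, lam J x (lam J y v) = lam J y (lam J x v).

Lemma K_comm n (J : 'Z_n -> 'Z_n) x y : x.2 = 0 -> y.2 = 0 -> comm J x y.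
Proof.
case: x => i j; case: y => i' j' /= -> -> [k l]; rewrite /lam /= !addr0.
by congr pair; rewrite -!addrA [- _ + _]addrC.
Qed.

Lemma K_lemma n (J : 'Z_n -> 'Z_n) w z : nonsingular J -> w.2 = 0 -> comm J w z -> z.2 = 0.
Proof.
case: w => i j; case: z => i' j' ns /= hj; subst j => hc.
have e : forall l, (J (l - (i - j')) - J (l - i)) = 0.
  move=> l.
  have h : (0 - J (l + j' - i')) - J (l + j' + 0 - i) = (0 - J (l + 0 - i)) - J (l + 0 + j' - i')
    := congr1 snd (hc (l, 0)).
  move: h; rewrite !addr0 !sub0r; have -> : l - (i - j') = l + j' - i by ring.
  move=> h; set a := J (l + j' - i') in h *; set b := J (l + j' - i) in h *.
  set c := J (l - i) in h *.
  have -> : b - c = (- c - a) - (- a - b) by ring.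
  by rewrite h subrr.
have hu : forall k, ind (i - j') k - ind i k = 0.
  by apply: (indep ns) => l; rewrite sum_ind2 e.
have := hu i; rewrite /ind eqxx.
case: eqP => [hi _|_ /eqP]; last by rewrite sub0r oppr_eq0 oner_eq0.
have -> : j' = i - (i - j') by ring.
by rewrite -hi subrr.
Qed.

Lemma big_lemma n (J : 'Z_n -> 'Z_n) z w : (2 < n)%N -> nonsingular J ->
  z.2 != 0 -> w.2 != 0 -> comm J z w -> z = w.
Proof.
case: z => i j; case: w => i' j' hn ns /= hj hj' hc.
pose p := i' - j'; pose q := i - j - j'; pose r := i - j; pose s := i' - j - j'.
have e : forall l, J (l - p) + J (l - q) - J (l - r) - J (l - s) = 0.
  move=> l.
  have h : (0 - J (l + j' - i')) - J (l + j' + j - i) = (0 - J (l + j - i)) - J (l + j + j' - i')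
    := congr1 snd (hc (l, 0)).
  move: h; rewrite !sub0r.
  have -> : l - p = l + j' - i' by rewrite /p; ring.
  have -> : l - q = l + j' + j - i by rewrite /q; ring.
  have -> : l - r = l + j - i by rewrite /r; ring.
  have -> : l - s = l + j + j' - i' by rewrite /s; ring.
  move=> h; set a := J (l + j' - i') in h *; set b := J (l + j' + j - i) in h *.
  set c := J (l + j - i) in h *; set d := J (l + j + j' - i') in h *.
  have -> : a + b - c - d = (- c - d) - (- a - b) by ring.
  by rewrite h subrr.
have hu : forall k, ind p k + ind q k - ind r k - ind s k = 0.
  by apply: (indep ns) => l; rewrite sum_ind4 e.
have one0 := oneZ_neq0 n; have two0 := twoZ_neq0 hn.
have rq : (r == q) = false.
  apply/negbTE; apply: contra hj' => /eqP h.
  have -> : j' = r - q by rewrite /r /q; ring.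
  by rewrite h subrr.
have rp : r = p.
  have := hu r; rewrite /ind eqxx rq.
  case: (r =P p) => [//|_]; case: (r =P s) => _ /= h; exfalso.
    move: two0; rewrite -oppr_eq0; have -> : - 2%:R = (0%:R + 0%:R - 1 - 1%:R : 'Z_n) by ring.
    by rewrite h eqxx.
  move: one0; rewrite -oppr_eq0; have -> : - 1 = (0%:R + 0%:R - 1 - 0%:R : 'Z_n) by ring.
  by rewrite h eqxx.
have qs : q = s.
  have qp : (q == p) = false.
    by rewrite -rp eq_sym rq.
  have := hu q; rewrite /ind eqxx qp (eq_sym q r) rq.
  case: (q =P s) => [//|_] /= h; exfalso.
  move: one0; have -> : 1 = (0%:R + 1 - 0%:R - 0%:R : 'Z_n) by ring.
  by rewrite h eqxx.
have ii : i = i'.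
  have -> : i = q + j + j' by rewrite /q; ring.
  by rewrite qs /s; ring.
subst i'; congr pair.
have -> : j = i - r by rewrite /r; ring.
by rewrite rp /p; ring.
Qed.

Lemma comm_transfer n (A C : 'Z_n -> 'Z_n) f x y :
  sol_iso A C f -> comm A x y -> comm C (f x) (f y).
Proof.
case=> [[g fg gf] hom] h v.
by rewrite -(gf v) -!hom h.
Qed.

Lemma Kpres3 n (A C : 'Z_n -> 'Z_n) f : (2 < n)%N -> nonsingular C -> sol_iso A C f ->
  forall i, (f (i, 0)).2 = 0.
Proof.
move=> hn ns hf i.
case: (eqVneq (f (i, 0)).2 0) => // hz; exfalso.
have c1 : comm C (f (i, 0)) (f (i + 1, 0)) by apply: comm_transfer hf (K_comm _ _ _).
have c2 : comm C (f (i + 1, 0)) (f (i, 0)) by apply: comm_transfer hf (K_comm _ _ _).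
case: (eqVneq (f (i + 1, 0)).2 0) => hw.
  by move: hz; rewrite (K_lemma ns hw c2) eqxx.
have := big_lemma hn ns hz hw c1.
case: hf => /bij_inj fi _ /fi /(congr1 fst) /= /eqP.
rewrite -subr_eq0 opprD addrA subrr sub0r oppr_eq0.
by rewrite oner_eq0.
Qed.

Lemma z2a (a : 'Z_2) : a + a = 0.
Proof. by apply/val_inj; case: a => [[|[|]]]. Qed.

Lemma z2j (j : 'Z_2) : j != 0 -> j = 1.
Proof. by case: j => [[|[|]]] // ? _; apply/val_inj. Qed.

Lemma Kpres2 (A C : 'Z_2 -> 'Z_2) f : nonsingular C -> sol_iso A C f ->
  forall i, (f (i, 0)).2 = 0.
Proof.
move=> ns hf i.
case: (eqVneq (f (i, 0)).2 0) => // hz; exfalso.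
have inv : forall w, lam C (f (i, 0)) (lam C (f (i, 0)) w) = w.
  case: hf => [[g fg gf] hom] w.
  rewrite -(gf w) -!hom; congr f.
  case: (g w) => k l; rewrite /lam /= !addr0.
  by rewrite -addrA -opprD z2a subr0.
move: hz inv; case: (f (i, 0)) => i0 j /= /z2j -> inv.
have rel : forall m, C m + C (m + 1) = 0.
  move=> m.
  have h : (0 - C (m + i0 - 1 + 1 - i0)) - C (m + i0 - 1 + 1 + 1 - i0) = 0
    := congr1 snd (inv (m + i0 - 1, 0)).
  move: h; rewrite sub0r -opprD => /eqP; rewrite oppr_eq0 => /eqP.
  have -> : m + i0 - 1 + 1 - i0 = m by ring.
  by have -> : m + i0 - 1 + 1 + 1 - i0 = m + 1 by ring.
have hu : forall k : 'Z_2, ind 0 k + ind 1 k = 0.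
  apply: (indep ns) => l.
  rewrite (eq_bigr (fun k => ind 0 k * C (l - k) + ind 1 k * C (l - k))).
    rewrite big_split /= !sum_ind.
    by rewrite subr0 addrC; have := rel (l - 1); rewrite subrK.
  by move=> k _; rewrite mulrDl.
by have := hu 0; rewrite /ind eqxx.
Qed.

Lemma spanning n (J : 'Z_n -> 'Z_n) : nonsingular J ->
  exists u : 'Z_n -> 'Z_n, \sum_k u k * J (0 - k) = 1.
Proof.
move=> ns.
pose Phi (u : {ffun 'Z_n -> 'Z_n}) : {ffun 'Z_n -> 'Z_n} :=
  [ffun l : 'Z_n => \sum_k u k * J (l - k)].
have inj : injective Phi.
  move=> u v huv; apply/ffunP => k; apply/eqP; rewrite -subr_eq0; apply/eqP.
  suff H : forall l, \sum_k (u k - v k) * J (l - k) = 0 by exact: (indep ns H).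
  move=> l; have := congr1 (fun h : {ffun 'Z_n -> 'Z_n} => h l) huv; rewrite /Phi !ffunE => e.
  rewrite (eq_bigr (fun k => u k * J (l - k) - v k * J (l - k))).
    by rewrite sumrB e subrr.
  by move=> x _; rewrite mulrBl.
have [psi _ hpsi] := injF_bij inj.
exists (psi [ffun l : 'Z_n => ind 0 l]).
have := congr1 (fun h : {ffun 'Z_n -> 'Z_n} => h 0) (hpsi [ffun l : 'Z_n => ind 0 l]).
by rewrite /Phi !ffunE /ind eqxx.
Qed.

Lemma columns n (A C : 'Z_n -> 'Z_n) f : nonsingular A -> sol_iso A C f ->
  (forall i, (f (i, 0)).2 = 0) -> forall k l, (f (k, l)).1 = (f (k, 0)).1.
Proof.
move=> ns hf hK.
pose P (s : 'Z_n) := forall k l, (f (k, l - s)).1 = (f (k, l)).1.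
have PA : forall m, P (A m).
  move=> m k l; case: hf => _ hom.
  have := congr1 fst (hom (k - m, 0) (k, l)).
  rewrite /lam /= hK !addr0.
  by have -> : k - (k - m) = m by ring.
have P0 : P 0 by move=> k l; rewrite subr0.
have PD : forall s t, P s -> P t -> P (s + t).
  move=> s t hs ht k l; have -> : l - (s + t) = l - t - s by ring.
  by rewrite hs ht.
have PM : forall s c, P s -> P (s *+ c).
  move=> s; elim=> [|c IH] hs; first by rewrite mulr0n.
  by rewrite mulrS; apply: PD => //; apply: IH.
have [u hu] := spanning ns.
have P1 : P 1.
  rewrite -hu; apply: big_ind => //.
  move=> k _; rewrite -[u k]natr_Zp mulr_natl; exact: PM.
move=> k l; have := PM 1 l P1 k l; rewrite -mulr_natl mulr1 natr_Zp subrr.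
by move=> ->.
Qed.

Lemma ZpE n (j : 'Z_n) : j = (nat_of_ord j)%:R.
Proof. by rewrite natr_Zp. Qed.

Lemma converse n (A C : 'Z_n -> 'Z_n) f : (1 < n)%N -> nonsingular A -> nonsingular C ->
  sol_iso A C f ->
  exists2 a : 'Z_n, a \is a GRing.unit & forall i : 'Z_n, a * A i = C (a * i).
Proof.
move=> hn nsA nsC hf.
have hK : forall i, (f (i, 0)).2 = 0.
  case: (ltngtP n 2) => h2; first by rewrite ltnS leqNgt hn in h2.
    exact: Kpres3 h2 nsC hf.
  by subst n; exact: Kpres2 nsC hf.
have col := columns nsA hf hK.
case: hf => [[g fg gf] hom].
pose al k := (f (k, 0)).1.
pose ga j := al j - al 0.
have H1 : forall i j k, al (k + j) = al k + (f (i, j)).2.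
  move=> i j k; have := congr1 fst (hom (i, j) (k, 0)).
  by rewrite /lam /= col.
have H2 : forall i j, (f (i, j)).2 = ga j.
  move=> i j; have e := H1 i j 0; rewrite add0r in e.
  by rewrite /ga e addrC addKr.
have gD : forall k j, ga (k + j) = ga k + ga j.
  by move=> k j; rewrite {1}/ga (H1 0 j k) H2 addrAC.
have gM : forall c, ga (1 *+ c) = ga 1 *+ c.
  elim=> [|c IH]; first by rewrite !mulr0n /ga subrr.
  by rewrite !mulrS gD IH.
have gL : forall j, ga j = ga 1 * j.
  by move=> j; rewrite {1}(ZpE j) gM -mulr_natr -ZpE.
exists (ga 1).
  apply/unitrPr; exists (g (0, 1)).2.
  by rewrite -gL -(H2 (g (0, 1)).1) -surjective_pairing gf.
move=> m.
have := (congr1 snd (hom (0, 0) (m, 0)) : (f (m + 0, 0 - A (m + 0 - 0))).2 =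
   (f (m, 0)).2 - C ((f (m, 0)).1 + (f (0, 0)).2 - (f (0, 0)).1)).
rewrite !H2 !addr0 !subr0.
have g0 : ga 0 = 0 by rewrite /ga subrr.
rewrite g0 addr0 !sub0r (gL (- A m)).
change ((f (m, 0)).1 - (f (0, 0)).1) with (ga m); rewrite (gL m).
by rewrite mulrN => /oppr_inj.
Qed.

Unset Implicit Arguments.

Theorem mainTheorem15 (n : nat) (A C : 'Z_n -> 'Z_n) :
  (1 < n)%N -> sym_param A -> sym_param C ->
  ((exists2 a : 'Z_n, a \is a GRing.unit & forall i : 'Z_n, a * A i = C (a * i)) ->
     sols_isomorphic A C)
  /\
  (nonsingular A -> nonsingular C -> sols_isomorphic A C ->
     exists2 a : 'Z_n, a \is a GRing.unit & forall i : 'Z_n, a * A i = C (a * i)).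
Proof.
move=> hn _ _; split; last first.
  by move=> nsA nsC [f hf]; exact: converse hn nsA nsC hf.
case=> a ua hA.
exists (fun x : XZ n => (a * x.1, a * x.2)); split.
  exists (fun x : XZ n => (a^-1 * x.1, a^-1 * x.2)).
    by case=> k l /=; rewrite !mulKr.
  by case=> k l /=; rewrite !mulVKr.
case=> i j [k l]; rewrite /lam /=.
have -> : a * k + a * j - a * i = a * (k + j - i) by ring.
by rewrite -hA mulrDr mulrBr.
Qed.
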